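(* Let $k\ge 2$ and let $G$ be the chain graph on $\{o_1,\dots,o_{k-1}\}\cup\{c_1,\dots,c_k\}$ with $E(G)=\bigcup_{m=1}^{k-1}\{\{o_m,c_m\},\{o_m,c_{m+1}\}\}$. Let $1\le i<j\le k$, so that the client proximity is $d(c_i,c_j)=j-i$. Starting from $G$, apply successively, for $m=i,i+1,\dots,j-1$, the $\sigma_x$-measurement rule at $o_m$ with support vertex $b_0=c_{m+1}$, i.e. replace the current graph $H$ by $\tau_{c_{m+1}}\big(\tau_{o_m}(\tau_{c_{m+1}}(H))-o_m\big)$. Then these $d(c_i,c_j)$ operations are well defined (at each step $c_{m+1}$ is a neighbour of $o_m$ in the current graph) and in the resulting graph the vertices $c_i$ and $c_j$ are adjacent. Equivalently, $d(c_i,c_j)$ single-qubit $\sigma_x$-measurements on orchestrator qubits of the chain graph state create, up to local unitaries, a graph state in which $c_i$ and $c_j$ are joined by an edge.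
   Context: All graphs are finite, simple and undirected. For a graph $H=(V,E)$ and $a\in V$, $N_a=\{b:\{a,b\}\in E\}$; $\tau_a(H)$ (local complementation) toggles the edge $\{b,c\}$ for every pair of distinct $b,c\in N_a$ and leaves the other edges unchanged; $H-a$ deletes $a$ and its incident edges. Graph state: $\ket{H}=\prod_{\{a,b\}\in E}\mathrm{CZ}_{ab}\ket{+}^{\otimes|V|}$. Measurement rules (up to local unitaries): $\sigma_z$ at $a$ gives $H-a$; $\sigma_y$ at $a$ gives $\tau_a(H)-a$; $\sigma_x$ at $a$ with chosen $b_0\in N_a$ gives $\tau_{b_0}(\tau_a(\tau_{b_0}(H))-a)$. A client vertex (one of the $c$'s) is a bridge if it is adjacent to more than one orchestrator vertex (one of the $o$'s). The proximity $d(c,c')$ of two distinct clients is $1$ plus the number of bridges lying strictly between $c$ and $c'$ on a shortest $c$–$c'$ path in $G$; for the chain graph, $d(c_i,c_j)=|j-i|$. *)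

(* Defs.v *)
From mathcomp Require Import all_ssreflect.
Set Implicit Arguments. Unset Strict Implicit. Unset Printing Implicit Defensive.

Section Graphs.
Variable T : finType.

(* a graph: (vertex set, edge set); edges are sets [set a; b] with a != b *)
Definition graph := ({set T} * {set {set T}})%type.

Definition nbhd (H : graph) (a : T) : {set T} :=
  [set b | (b != a) && ([set a; b] \in H.2)].

Definition lc (H : graph) (a : T) : graph :=
  (H.1, [set e : {set T} | (e \in H.2) (+)
     [exists b, exists c, [&& b \in nbhd H a, c \in nbhd H a, b != c
                          & e == [set b; c]]]]).

Definition delv (H : graph) (a : T) : graph :=
  (H.1 :\ a, [set e in H.2 | a \notin e]).

Definition xmeas (H : graph) (a b0 : T) : graph :=
  lc (delv (lc (lc H b0) a) a) b0.

End Graphs.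

(* Chain graph with parameter k.  Ambient type bool * 'I_k.+1:
   orchestrator o_m = (false, m) (1 <= m <= k-1), client c_m = (true, m)
   (1 <= m <= k); indices are 1-based as in the paper. *)
Definition cvert (k : nat) := (bool * 'I_k.+1)%type.
Definition orch (k m : nat) : cvert k := (false, inord m).
Definition client (k m : nat) : cvert k := (true, inord m).

Definition chain_graph (k : nat) : graph (cvert k) :=
  ([set v : cvert k | (1 <= v.2) && (if v.1 then v.2 <= k else v.2 <= k.-1)],
   [set e : {set cvert k} | [exists m : 'I_k.+1, (1 <= m <= k.-1) &&
      ((e == [set orch k m; client k m]) || (e == [set orch k m; client k m.+1]))]]).

Definition after_meas (k i m : nat) : graph (cvert k) :=
  foldl (fun H l => xmeas H (orch k l) (client k l.+1))
        (chain_graph k) (iota i (m - i)).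

(* Main.v *)
Require Import Defs.
From mathcomp Require Import all_ssreflect zify.
Set Implicit Arguments. Unset Strict Implicit. Unset Printing Implicit Defensive.

Section G.
Variable T : finType.
Definition edges_of (P : T -> T -> bool) : {set {set T}} :=
  [set e | [exists x, exists y, [&& x != y, P x y & e == [set x; y]]]].

Lemma set2_eq (x y u v : T) : x != y -> [set x; y] = [set u; v] ->
  (u == x) && (v == y) || (u == y) && (v == x).
Proof.
move=> nxy E.
have hu : u \in [set x; y] by rewrite E !inE eqxx.
have hv : v \in [set x; y] by rewrite E !inE eqxx orbT.
have hx : x \in [set u; v] by rewrite -E !inE eqxx.
have hy : y \in [set u; v] by rewrite -E !inE eqxx orbT.
move: hu hv hx hy; rewrite !inE.
case/orP=> /eqP->; case/orP=> /eqP->; rewrite ?eqxx ?orbT //=.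
- by rewrite orbb => _ /eqP E'; rewrite E' eqxx in nxy.
- by rewrite orbb => /eqP E' _; rewrite E' eqxx in nxy.
Qed.

Lemma mem_edges (P : T -> T -> bool) x y : (forall u v, P u v = P v u) ->
  ([set x; y] \in edges_of P) = (x != y) && P x y.
Proof.
move=> sP; rewrite inE; apply/existsP/idP.
- case=> u /existsP [v /and3P [nuv Puv /eqP E]].
  have := set2_eq nuv (esym E); case/orP=> /andP [/eqP ? /eqP ?]; subst; rewrite ?nuv //.
  by rewrite eq_sym nuv sP.
- case/andP=> nxy Pxy; exists x; apply/existsP; exists y; by rewrite nxy Pxy eqxx.
Qed.

Lemma edge_cases (e : {set T}) :
  (exists x y, x != y /\ e = [set x; y]) \/
  (forall P, e \notin edges_of P) /\
  (forall x y, x != y -> e != [set x; y]).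
Proof.
case: (boolP [exists x, exists y, (x != y) && (e == [set x; y])]).
- case/existsP=> x /existsP [y /andP [nxy /eqP ->]]; left; by exists x, y.
- move=> H; right; split.
  + move=> P; rewrite inE; apply/negP=> /existsP [x /existsP [y /and3P [a _ c]]].
    by move/negP: H; apply; apply/existsP; exists x; apply/existsP; exists y; rewrite a c.
  + move=> x y nxy; apply/negP=> ex.
    by move/negP: H; apply; apply/existsP; exists x; apply/existsP; exists y; rewrite nxy ex.
Qed.

Lemma edges_ext P Q : (forall u v, P u v = P v u) -> (forall u v, Q u v = Q v u) ->
  (forall x y, x != y -> P x y = Q x y) -> edges_of P = edges_of Q.
Proof.
move=> sP sQ PQ; apply/setP=> e.
case: (edge_cases e) => [[x [y [nxy ->]]]|[H _]].
- by rewrite !mem_edges // nxy PQ.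
- by rewrite (negbTE (H P)) (negbTE (H Q)).
Qed.

Lemma nbhd_edges (H : graph T) P a : (forall u v, P u v = P v u) ->
  H.2 = edges_of P -> nbhd H a = [set b | (b != a) && P a b].
Proof.
move=> sP E; apply/setP=> b; rewrite !inE E mem_edges //.
by case: (b =P a) => [->|/eqP nb]; rewrite ?eqxx //= eq_sym nb.
Qed.

Definition lcP (P : T -> T -> bool) a x y :=
  P x y (+) [&& x != a, y != a, P a x & P a y].
Definition delP (P : T -> T -> bool) a x y := [&& P x y, x != a & y != a].

Lemma lcP_sym P a : (forall u v, P u v = P v u) -> forall u v, lcP P a u v = lcP P a v u.
Proof. move=> sP u v; rewrite /lcP sP; congr (_ (+) _); by case: (u != a); case: (v != a); case: (P a u); case: (P a v). Qed.
Lemma delP_sym P a : (forall u v, P u v = P v u) -> forall u v, delP P a u v = delP P a v u.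
Proof. move=> sP u v; rewrite /delP sP; by case: (u != a); case: (v != a). Qed.

Lemma lc_edges (H : graph T) P a : (forall u v, P u v = P v u) ->
  H.2 = edges_of P -> (lc H a).2 = edges_of (lcP P a).
Proof.
move=> sP E; apply/setP=> e; rewrite /lc /= inE (nbhd_edges a sP E) E.
case: (edge_cases e) => [[x [y [nxy ->]]]|[H1 H2]].
- rewrite !mem_edges ?nxy //=; last exact: lcP_sym.
  rewrite /lcP; congr (_ (+) _); apply/existsP/idP.
  + case=> b /existsP [c /and4P [hb hc nbc /eqP E2]].
    move: hb hc; rewrite !inE; case/orP: (set2_eq nxy E2)=> /andP [/eqP-> /eqP->];
      by do 2 case/andP=> ??; apply/and4P.
  + case/and4P=> ha hb hxa hya; exists x; apply/existsP; exists y.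
    by rewrite !inE ha hb hxa hya nxy eqxx.
- rewrite (negbTE (H1 _)) (negbTE (H1 _)) /=; apply/negbTE/negP.
  case/existsP=> b /existsP [c /and4P [_ _ nbc /eqP E2]].
  by move/negP: (H2 _ _ nbc); apply; rewrite E2.
Qed.

Lemma delv_edges (H : graph T) P a : (forall u v, P u v = P v u) ->
  H.2 = edges_of P -> (delv H a).2 = edges_of (delP P a).
Proof.
move=> sP E; apply/setP=> e; rewrite /delv /= inE E.
case: (edge_cases e) => [[x [y [nxy ->]]]|[H1 H2]].
- rewrite !mem_edges ?nxy //=; last exact: delP_sym.
  by rewrite /delP !inE negb_or !(eq_sym a).
- by rewrite (negbTE (H1 _)) (negbTE (H1 _)).
Qed.

Lemma xmeas_edges (H : graph T) P a b : (forall u v, P u v = P v u) ->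
  H.2 = edges_of P ->
  (xmeas H a b).2 = edges_of (lcP (delP (lcP (lcP P b) a) a) b).
Proof.
move=> sP E; rewrite /xmeas.
have s1 := lcP_sym b sP.
have s2 := lcP_sym a s1.
have s3 := delP_sym a s2.
apply: lc_edges => //; apply: delv_edges => //; apply: lc_edges => //; exact: lc_edges.
Qed.
End G.

Definition Rk (k i m : nat) (x y : cvert k) : bool :=
  (~~ x.1) && [&& 1 <= x.2, x.2 <= k.-1 & y.1 &&
     [|| (y.2 == x.2 :> nat) && ((x.2 < i) || (m < x.2)),
         (y.2 == x.2.+1 :> nat) && ((x.2 < i) || (m <= x.2)) |
         (y.2 == i :> nat) && (x.2 == m :> nat)]]
  || [&& x.1, y.1, x.2 == i :> nat, i < y.2 & y.2 <= m].
Definition Ek k i m (x y : cvert k) := Rk i m x y || Rk i m y x.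

Lemma Ek_sym k i m : forall u v : cvert k, Ek i m u v = Ek i m v u.
Proof. by move=> u v; rewrite /Ek orbC. Qed.

Lemma eq_inord k (o : 'I_k.+1) n : n <= k -> (o == inord n) = (o == n :> nat).
Proof. by move=> h; rewrite -val_eqE /= inordK. Qed.


Definition inN (T : finType) (P : T -> T -> bool) a x := (x != a) && P a x.
Lemma lcPE (T : finType) (P : T -> T -> bool) a x y :
  lcP P a x y = P x y (+) (inN P a x && inN P a y).
Proof. by rewrite /lcP /inN; case: (x != a); case: (y != a); case: (P a x); case: (P a y). Qed.

Ltac vt := rewrite /Ek /Rk /orch /client /=;
  rewrite ?xpair_eqE /= ?eq_inord ?inordK //; try lia.

Section S.
Variables k i m : nat.
Hypotheses (h1 : 1 <= i) (h2 : i <= m) (h3 : m < k).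
Let a := orch k m.
Let b := client k m.+1.
Let o' := orch k m.+1.
Let ci := client k i.

Lemma N0E x : inN (Ek i m) b x = (x == a) || (x == o') && (m.+1 <= k.-1).
Proof.
case: x => [bx nx]; have := ltn_ord nx; rewrite /inN /a /b /o'. vt.
Qed.

Lemma N1E x : inN (lcP (Ek i m) b) a x =
  [|| x == ci, x == b | (x == o') && (m.+1 <= k.-1)].
Proof.
rewrite /inN lcPE -/(inN _ _ _) !N0E.
case: x => [bx nx]; have := ltn_ord nx; rewrite /a /b /o' /ci. vt.
Qed.

Lemma N3E x : inN (delP (lcP (lcP (Ek i m) b) a) a) b x = (x == ci).
Proof.
rewrite /inN /delP lcPE !N1E lcPE !N0E.
case: x => [bx nx]; have := ltn_ord nx; rewrite /a /b /o' /ci. vt.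
Qed.

Lemma stepE x y : x != y ->
  lcP (delP (lcP (lcP (Ek i m) b) a) a) b x y = Ek i m.+1 x y.
Proof.
move=> nxy; rewrite lcPE !N3E.
have -> : (x == ci) && (y == ci) = false.
  by apply/negbTE; apply: contra nxy => /andP [/eqP -> /eqP ->].
rewrite addbF /delP lcPE !N1E lcPE !N0E.
move: nxy; case: x => [bx nx]; case: y => [bY ny]; have := ltn_ord nx; have := ltn_ord ny.
rewrite /a /b /o' /ci /Ek /Rk /orch /client /=.
rewrite ?xpair_eqE /= ?eq_inord ?inordK //; try lia.
rewrite -[nx == ny]val_eqE /=.
case: bx; case: bY => /= hy hx; rewrite ?eqxx ?andbT ?andbF ?orbF /= => hn.
all: lia.
Qed.
End S.

Lemma Ek_step_sym k m (P : cvert k -> cvert k -> bool) :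
  (forall u v, P u v = P v u) ->
  forall u v, lcP (delP (lcP (lcP P (client k m.+1)) (orch k m)) (orch k m)) (client k m.+1) u v
  = lcP (delP (lcP (lcP P (client k m.+1)) (orch k m)) (orch k m)) (client k m.+1) v u.
Proof.
move=> sP; apply: lcP_sym; apply: delP_sym; apply: lcP_sym; exact: lcP_sym.
Qed.

Lemma chainE k i : 1 <= i -> (chain_graph k).2 = edges_of (Ek i i).
Proof.
move=> h1; apply/setP=> e; rewrite /chain_graph /= inE.
case: (edge_cases e) => [[x [y [nxy ->]]]|[H1 H2]].
- rewrite mem_edges ?nxy /=; last exact: Ek_sym.
  apply/existsP/idP.
  + case=> m /andP [hm /orP [] /eqP E]; have := set2_eq nxy E;
    case/orP=> /andP [/eqP ? /eqP ?]; subst; have := ltn_ord m;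
    rewrite /Ek /Rk /orch /client /= ?inordK; lia.
  + case: x nxy => [bx nx]; case: y => [bY ny] nxy.
    have := ltn_ord nx; have := ltn_ord ny.
    rewrite /Ek /Rk /= => hy hx.
    case: bx nxy; case: bY => nxy /=; rewrite ?andbF ?andbT ?orbF //=.
    * rewrite -[_ == _]val_eqE /= in nxy; lia.
    * move=> H. exists ny; rewrite /orch /client !inord_val.
      have -> : 0 < ny <= k.-1 by case/and3P: H => -> ->.
      have [e1|e1] : nx = ny :> nat \/ nx = ny.+1 :> nat by lia.
      -- have -> : nx = ny by apply: val_inj.
         by rewrite setUC eqxx.
      -- have -> : (inord ny.+1 : 'I_k.+1) = nx by apply/val_inj; rewrite /= inordK; lia.
         by rewrite setUC eqxx orbT.
    * move=> H. exists nx; rewrite /orch /client !inord_val.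
      have -> : 0 < nx <= k.-1 by case/and3P: H => -> ->.
      have [e1|e1] : ny = nx :> nat \/ ny = nx.+1 :> nat by lia.
      -- have -> : ny = nx by apply: val_inj.
         by rewrite eqxx.
      -- have -> : (inord nx.+1 : 'I_k.+1) = ny by apply/val_inj; rewrite /= inordK; lia.
         by rewrite eqxx orbT.
- rewrite (negbTE (H1 _)); apply/negbTE/negP; case/existsP=> m /andP [_ /orP [] /eqP E].
  + have nn : orch k m != client k m by rewrite /orch /client xpair_eqE.
    by move/negP: (H2 _ _ nn); apply; rewrite E.
  + have nn : orch k m != client k m.+1 by rewrite /orch /client xpair_eqE.
    by move/negP: (H2 _ _ nn); apply; rewrite E.
Qed.

Lemma afterE k i d : 1 <= i -> i + d <= k ->
  (after_meas k i (i + d)).2 = edges_of (Ek i (i + d)).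
Proof.
move=> h1; elim: d => [|d IH] hd.
- by rewrite addn0 /after_meas subnn /=; exact: chainE.
- have IH' := IH ltac:(lia).
  rewrite /after_meas addKn.
  have -> : iota i d.+1 = rcons (iota i d) (i + d) by rewrite -cats1 -addn1 iotaD.
  rewrite foldl_rcons.
  move: IH'; rewrite /after_meas addKn => IH'.
  rewrite (xmeas_edges _ _ (@Ek_sym k i (i + d)) IH').
  rewrite addnS; apply: edges_ext.
  + exact: Ek_step_sym (@Ek_sym k i (i + d)).
  + exact: Ek_sym.
  + move=> x y nxy; apply: stepE => //; lia.
Qed.

Lemma afterE' k i m : 1 <= i -> i <= m -> m <= k ->
  (after_meas k i m).2 = edges_of (Ek i m).
Proof. by move=> h1 h2 h3; rewrite -(subnKC h2); apply: afterE => //; lia. Qed.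

Theorem lemma3 (k i j : nat) :
  2 <= k -> 1 <= i -> i < j -> j <= k ->
  (forall m, i <= m < j ->
     client k m.+1 \in nbhd (after_meas k i m) (orch k m))
  /\ [set client k i; client k j] \in (after_meas k i j).2.
Proof.
move=> hk h1 hij hj; split.
- move=> m /andP [hm1 hm2].
  rewrite (nbhd_edges _ (@Ek_sym k i m) (afterE' h1 hm1 _)); last by lia.
  rewrite inE /Ek /Rk /orch /client /= ?xpair_eqE /= ?eq_inord ?inordK //; try lia.
- rewrite (afterE' h1 (ltnW hij) hj) mem_edges; last exact: Ek_sym.
  rewrite /Ek /Rk /client /= ?xpair_eqE /= ?eq_inord ?inordK //; try lia.
Qed.
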